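(* Let $G$ and the Kuramoto model be as in the context, and assume moreover that no edge of $G$ joins two vertices that both have degree at least $3$. Then the number $\mathcal{N}$ of distinct stable fixed points satisfies $$\mathcal{N}\le\prod_{k=1}^c\left[2\cdot\lfloor n_k/4\rfloor+1\right].$$
   Context: Let $G$ be a finite connected planar graph with vertices $1,\dots,n$ and $m$ edges, such that every edge of $G$ lies on at least one cycle of $G$, and fix a planar embedding of $G$. Let $F_1,\dots,F_c$ ($c=m-n+1$) be the bounded faces of the embedding, and let $n_k$ be the number of edges on the boundary of $F_k$. Fix $K>0$ and consider the Kuramoto model $\dot\theta_i=-K\sum_{j\sim i}\sin(\theta_i-\theta_j)$, $i=1,\dots,n$ ($j\sim i$ means $j$ is adjacent to $i$). A fixed point is $\theta\in\mathbb{R}^n$ with $\sum_{j\sim i}\sin(\theta_i-\theta_j)=0$ for all $i$; fixed points are counted up to adding one common constant to all $\theta_i$ and integer multiples of $2\pi$ to individual $\theta_i$. The stability matrix $M$ has entries $M_{ij}=K\cos(\theta_i-\theta_j)$ if $i\sim j$, $M_{ii}=-\sum_{k\sim i}K\cos(\theta_i-\theta_k)$, and $0$ otherwise; a fixed point is stable if $M$ is negative semidefinite. *)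

(* Defs.v *)
From HB Require Import structures.
From mathcomp Require Import all_boot all_order all_algebra.
From mathcomp Require Import reals trigo.
Set Implicit Arguments. Unset Strict Implicit. Unset Printing Implicit Defensive.
Import Order.TTheory GRing.Theory Num.Theory.

Definition simple_graph n (e : rel 'I_n) : Prop :=
  (forall u v, e u v = e v u) /\ (forall u, ~~ e u u).

Definition connected_graph n (e : rel 'I_n) : Prop :=
  forall u v, connect e u v.

Definition deg n (e : rel 'I_n) (u : 'I_n) : nat := #|[set v | e u v]|.

Definition edge_on_cycle n (e : rel 'I_n) (u v : 'I_n) : Prop :=
  exists p : seq 'I_n,
    [/\ uniq p, 2 < size p, cycle e p, u \in p & (next p u == v) || (next p v == u)].

Definition every_edge_on_cycle n (e : rel 'I_n) : Prop :=
  forall u v, e u v -> edge_on_cycle e u v.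

Definition darts n (e : rel 'I_n) : {set 'I_n * 'I_n} := [set x | e x.1 x.2].

Definition edges n (e : rel 'I_n) : {set {set 'I_n}} :=
  [set [set x.1; x.2] | x in darts e].

(* rot u is the cyclic successor map on the neighbourhood of u:
   it maps neighbours of u to neighbours of u and the neighbours of u form a
   single orbit of it (hence it is a cyclic permutation of N(u)). *)
Definition rotation_system n (e : rel 'I_n) (rot : 'I_n -> 'I_n -> 'I_n) : Prop :=
  forall u, (forall v, e u v -> e u (rot u v)) /\
            (forall v w, e u v -> e u w -> fconnect (rot u) v w).

Definition face_step n (rot : 'I_n -> 'I_n -> 'I_n) (x : 'I_n * 'I_n) : 'I_n * 'I_n :=
  (x.2, rot x.2 x.1).

(* faces = orbits of the face-tracing permutation on the darts *)
Definition faces n (e : rel 'I_n) (rot : 'I_n -> 'I_n -> 'I_n) : {set {set 'I_n * 'I_n}} :=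
  [set [set y in darts e | fconnect (face_step rot) x y] | x in darts e].

Definition face_size n (F : {set 'I_n * 'I_n}) : nat :=
  #|[set [set x.1; x.2] | x in F]|.

(* the rotation system is a planar embedding (of the connected graph):
   Euler's formula  V - E + F = 2  (the edgeless one-vertex graph is trivially planar,
   its unique face having no darts). *)
Definition planar_rotation n (e : rel 'I_n) (rot : 'I_n -> 'I_n -> 'I_n) : Prop :=
  rotation_system e rot /\
  (#|edges e| = 0%N \/ (n + #|faces e rot| = #|edges e| + 2)%N).

Local Open Scope ring_scope.

Definition kuramoto_fixed_point (R : realType) n (e : rel 'I_n) (theta : 'I_n -> R) : Prop :=
  forall i : 'I_n, \sum_(j | e i j) sin (theta i - theta j) = 0.

Definition stability_matrix (R : realType) n (e : rel 'I_n) (K : R) (theta : 'I_n -> R)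
  : 'M[R]_n :=
  \matrix_(i, j) (if i == j then - \sum_(k | e i k) K * cos (theta i - theta k)
                  else if e i j then K * cos (theta i - theta j) else 0).

Definition neg_semidef (R : realType) n (M : 'M[R]_n) : Prop :=
  forall x : 'cV[R]_n, (x^T *m M *m x) 0 0 <= 0.

Definition stable_fixed_point (R : realType) n (e : rel 'I_n) (K : R) (theta : 'I_n -> R)
  : Prop :=
  kuramoto_fixed_point e theta /\ neg_semidef (stability_matrix e K theta).

Definition same_fixed_point (R : realType) n (theta theta' : 'I_n -> R) : Prop :=
  exists (c : R) (k : 'I_n -> int),
    forall i, theta' i = theta i + c + (k i)%:~R * (2 * pi).

(* Main.v *)
Require Import Defs.
From HB Require Import structures.
From mathcomp Require Import all_boot all_order all_algebra.
From mathcomp Require Import reals trigo.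
From mathcomp Require Import zify ring lra.
Import Order.TTheory GRing.Theory Num.Theory.

Section Part1.
Local Set Implicit Arguments. Local Unset Strict Implicit. Local Unset Printing Implicit Defensive.
Local Open Scope ring_scope.

Section Trig.
Variable R : realType.

Lemma two_pi_n n : n%:R * (2 * pi) = (pi : R) *+ 2 *+ n.
Proof. ring. Qed.

Lemma cos_addint (x : R) (k : int) : cos (x + k%:~R * (2 * pi)) = cos x.
Proof.
have P n (y : R) : cos (y + n%:R * (2 * pi)) = cos y.
  by rewrite two_pi_n periodicn //; apply: cosD2pi.
case: k => n; first by rewrite P.
rewrite NegzE mulrNz mulNr.
by rewrite -[in RHS](subrK ((n.+1)%:R * (2 * pi)) x) P.
Qed.

Lemma sin_addint (x : R) (k : int) : sin (x + k%:~R * (2 * pi)) = sin x.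
Proof.
have P n (y : R) : sin (y + n%:R * (2 * pi)) = sin y.
  by rewrite two_pi_n periodicn //; apply: sinD2pi.
case: k => n; first by rewrite P.
rewrite NegzE mulrNz mulNr.
by rewrite -[in RHS](subrK ((n.+1)%:R * (2 * pi)) x) P.
Qed.

Lemma cos_eq1 (t : R) : cos t = 1 -> exists k : int, t = k%:~R * (2 * pi).
Proof.
move=> ct.
have pi0 : 0 < (pi : R) := @pi_gt0 R.
have p20 : 0 < 2 * (pi : R) by rewrite mulr_gt0.
set k := Num.floor (t / (2 * pi)).
exists k.
have h1 : k%:~R <= t / (2 * pi) := Num.Theory.floor_le _.
have h2 : t / (2 * pi) < (k + 1)%:~R := Num.Theory.floorD1_gt _.
rewrite ler_pdivlMr // in h1; rewrite ltr_pdivrMr // in h2.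
rewrite intrD mulrDl mul1r in h2.
set r := t - k%:~R * (2 * pi).
have cr : cos r = 1.
  by rewrite /r -mulNr -intrN cos_addint.
have r0 : 0 <= r by rewrite subr_ge0.
have r2 : r < 2 * pi by rewrite /r ltrBlDr addrC.
suff : r = 0 by move/eqP; rewrite subr_eq0 => /eqP.
have [rp|rp] := lerP r pi.
  apply: cos_inj; rewrite ?in_itv /= ?r0 ?rp ?lexx ?pi_ge0 ?cos0 //.
have s0 : 0 <= 2 * pi - r by lra.
have sp : 2 * pi - r <= pi by lra.
have cs : cos (2 * pi - r) = 1.
  by rewrite addrC -(mul1r (2 * pi)) -[1]/(1%:~R) cos_addint cosN.
have : 2 * pi - r = 0.
  apply: cos_inj; rewrite ?in_itv /= ?s0 ?sp ?lexx ?pi_ge0 ?cos0 //.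
lra.
Qed.

Lemma sincos_eq (a b : R) : sin a = sin b -> cos a = cos b ->
  exists k : int, a = b + k%:~R * (2 * pi).
Proof.
move=> sab cab.
have : cos (a - b) = 1 by rewrite cosB -cab -sab -!expr2 cos2Dsin2.
move/cos_eq1 => [k hk]; exists k; rewrite -hk; ring.
Qed.

End Trig.

End Part1.

Section Part2.
Local Set Implicit Arguments. Local Unset Strict Implicit. Local Unset Printing Implicit Defensive.
Local Open Scope ring_scope.

Section Stab.
Variable R : realType.

Lemma qform_delta n (M : 'M[R]_n) i j :
  ((delta_mx i (0 : 'I_1) : 'cV[R]_n)^T *m M *m (delta_mx j (0 : 'I_1) : 'cV[R]_n)) 0 0 = M i j.
Proof. by rewrite trmx_delta -rowE -colE !mxE. Qed.

Lemma qform_delta' n (M : 'M[R]_n) i j :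
  ((delta_mx i (0 : 'I_1) : 'cV[R]_n)^T *m M *m (delta_mx j (0 : 'I_1) : 'cV[R]_n)) = const_mx (M i j).
Proof. by apply/matrixP => a b; rewrite !ord1 qform_delta mxE. Qed.

Lemma qform2 n (M : 'M[R]_n) u v (a b : R) :
  let x := a *: (delta_mx u (0 : 'I_1) : 'cV[R]_n) + b *: delta_mx v 0 in
  (x^T *m M *m x) 0 0 = a * a * M u u + a * b * (M u v + M v u) + b * b * M v v.
Proof.
rewrite /= [(_ + _)^T]linearD /= ![(_ *: _)^T]linearZ /= !mulmxDl !mulmxDr -!scalemxAl -!scalemxAr !qform_delta' !mxE; ring.
Qed.

Lemma nbr_sum n (e : rel 'I_n) u v (f : 'I_n -> R) : e u v ->
  \sum_(j | e u j) f j = f v + \sum_(j in [set w | e u w] :\ v) f j.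
Proof.
move=> euv.
rewrite (eq_bigl (fun j => j \in [set w | e u w])); last by move=> j; rewrite inE.
rewrite (bigD1 v) ?inE //=; congr (_ + _); apply: eq_bigl => j; rewrite !inE andbC.
by [].
Qed.

Lemma stable_cos_ge0 n (e : rel 'I_n) (K : R) theta :
  0 < K -> simple_graph e -> stable_fixed_point e K theta ->
  forall u v, e u v -> (deg e u < 3)%N -> 0 <= cos (theta u - theta v).
Proof.
move=> K0 [esym eirr] [fp nsd] u v euv degu.
rewrite leNgt; apply/negP => cneg.
set M := stability_matrix e K theta.
have uv : u != v by apply: contraTneq euv => ->; rewrite (negbTE (eirr v)).
have Muu : M u u = - \sum_(k | e u k) K * cos (theta u - theta k) by rewrite mxE eqxx.
have Muv : M u v = K * cos (theta u - theta v) by rewrite mxE (negbTE uv) euv.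
have Mvu : M v u = K * cos (theta u - theta v).
  by rewrite mxE eq_sym (negbTE uv) esym euv -opprB cosN.
have q1 : M u u <= 0.
  have := nsd (1 *: delta_mx u 0 + 0 *: delta_mx u 0); rewrite qform2; lra.
set N := [set w | e u w] :\ v.
have cN : (#|N| <= 1)%N.
  have : v \in [set w | e u w] by rewrite inE.
  move=> vin; have := cardsD1 v [set w | e u w]; rewrite vin /deg in degu *; rewrite /N; lia.
move: cN; rewrite leq_eqVlt ltnS leqn0 => /orP [/cards1P [w Nw] | /eqP/cards0_eq N0].
- have fpu := fp u; rewrite (nbr_sum _ euv) -/N Nw big_set1 in fpu.
  rewrite Muu (nbr_sum _ euv) -/N Nw big_set1 in q1.
  have cw : cos (theta u - theta w) ^+ 2 = cos (theta u - theta v) ^+ 2.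
    have h1 := cos2Dsin2 (theta u - theta w).
    have h2 := cos2Dsin2 (theta u - theta v).
    have : sin (theta u - theta w) = - sin (theta u - theta v) by lra.
    move=> s; rewrite s sqrrN in h1; lra.
  have K1 : 0 < K * cos (theta u - theta w) by nra.
  have cpos : 0 < cos (theta u - theta w) by rewrite (pmulr_rgt0 _ K0) in K1.
  have ce : cos (theta u - theta w) = - cos (theta u - theta v).
    have : (cos (theta u - theta w) - (- cos (theta u - theta v))) *
           (cos (theta u - theta w) + (- cos (theta u - theta v))) = 0.
      rewrite -subr_sqr sqrrN cw; ring.
    move/eqP; rewrite mulf_eq0 => /orP [/eqP h | /eqP h]; lra.
  have M0 : M u u = 0 by rewrite Muu (nbr_sum _ euv) -/N Nw big_set1 ce; ring.
  set c := K * cos (theta u - theta v).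
  have c0 : c < 0 by rewrite /c; nra.
  set t := (`|M v v| + 1) / (2 * c).
  have := nsd (t *: delta_mx u 0 + 1 *: delta_mx v 0); rewrite qform2 M0 Muv Mvu -/c.
  have tc : t * 1 * (c + c) = `|M v v| + 1.
    by rewrite /t; field; rewrite ltr0_neq0.
  rewrite tc mul1r => h.
  have := ler_norm (- M v v); rewrite normrN; lra.
- rewrite Muu (nbr_sum _ euv) -/N N0 big_set0 in q1; nra.
Qed.

End Stab.

End Part2.

Section Part3.
Local Set Implicit Arguments. Local Unset Strict Implicit. Local Unset Printing Implicit Defensive.
Local Open Scope ring_scope.

Lemma grad_mx (F : fieldType) n m f (B : 'M[F]_(n,m)) (C : 'M[F]_(m,f)) :
  B *m C = 0 -> (n <= \rank B + 1)%N -> (f <= \rank C)%N -> (m + 1 <= n + f)%N ->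
  forall d : 'rV_m, d *m C = 0 -> exists p : 'rV_n, d = p *m B.
Proof.
move=> BC rB rC mnf d dC.
have sB : (B <= kermx C)%MS by apply/sub_kermxP.
have rk : (\rank (kermx C) <= \rank B)%N.
  rewrite mxrank_ker; have := rank_leq_row C; lia.
have sK : (kermx C <= B)%MS.
  by have [le eqv] := mxrank_leqif_sup sB; rewrite -eqv eqn_leq rk le.
have : (d <= B)%MS by apply: submx_trans sK; apply/sub_kermxP.
by case/submxP => p ->; exists p.
Qed.

End Part3.

Section Part4.
Local Set Implicit Arguments. Local Unset Strict Implicit. Local Unset Printing Implicit Defensive.

Section Faces.
Variables (n : nat) (e : rel 'I_n) (rot : 'I_n -> 'I_n -> 'I_n).
Hypothesis sg : simple_graph e.
Hypothesis rs : rotation_system e rot.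

Local Notation D := (darts e).
Local Notation fs := (face_step rot).

Lemma inD x : (x \in D) = e x.1 x.2.
Proof. by rewrite inE. Qed.

Lemma fs_in : {homo fs : x / x \in D}.
Proof.
move=> [u v]; rewrite !inD /= => euv.
by apply: (rs v).1; rewrite sg.1.
Qed.

Lemma rot_inj v : {in [pred w | e v w] &, injective (rot v)}.
Proof.
set S := [set w | e v w].
have rin : forall w, w \in S -> rot v w \in S by move=> w; rewrite !inE; apply: (rs v).1.
have sur : S \subset rot v @: S.
  apply/subsetP => w wS.
  have rw := rin _ wS.
  have : fconnect (rot v) (rot v w) w by apply: (rs v).2; rewrite -?inE.
  move/iter_findex; set k := findex _ _ _ => hk.
  have itS : forall j, iter j (rot v) w \in S.
    by elim=> [|j IH] //=; apply: rin.
  by apply/imsetP; exists (iter k (rot v) w) => //; rewrite -iterS iterSr -/k hk.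
have sub : rot v @: S \subset S by apply/subsetP => _ /imsetP [w wS ->]; apply: rin.
have ce : #|rot v @: S| == #|S|.
  by rewrite eqn_leq (subset_leq_card sub) (subset_leq_card sur).
move/imset_injP: ce => inj a b ha hb; apply: inj; rewrite inE; [exact: ha | exact: hb].
Qed.

Lemma fs_inj : {in D &, injective fs}.
Proof.
move=> [a b] [c d]; rewrite !inD /= => eab ecd [bd].
subst d => h; congr (_, _); apply: (@rot_inj b) => //; rewrite inE sg.1 //.
Qed.

Lemma fconnect_sym_D : {in D &, forall x y, fconnect fs x y = fconnect fs y x}.
Proof. exact: fconnect_sym_in fs_in fs_inj. Qed.

Lemma fconnect_D x y : x \in D -> fconnect fs x y -> y \in D.
Proof.
move=> xD /iter_findex <-; elim: (findex _ _ _) => [|k IH] //=; exact: fs_in.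
Qed.

Definition fc x := [set y in D | fconnect fs x y].

Lemma fc_self x : x \in D -> x \in fc x.
Proof. by move=> xD; rewrite inE xD connect0. Qed.

Lemma fc_sub x : fc x \subset D.
Proof. by apply/subsetP => y; rewrite inE => /andP []. Qed.

Lemma fc_eq x y : x \in D -> y \in fc x -> fc y = fc x.
Proof.
move=> xD; rewrite inE => /andP [yD cxy].
apply/setP => z; rewrite !inE; case: (e z.1 z.2) => //=.
apply/idP/idP => h.
- exact: (connect_trans cxy h).
- by apply: (connect_trans _ h); rewrite fconnect_sym_D.
Qed.

Lemma faces_mem F x : F \in faces e rot -> x \in D -> (x \in F) = (F == fc x).
Proof.
case/imsetP => x0 x0D ->; move=> xD; rewrite -/(fc x0).
apply/idP/eqP => [h | ->]; last exact: fc_self.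
by rewrite (fc_eq x0D h).
Qed.

Lemma fc_faces x : x \in D -> fc x \in faces e rot.
Proof. by move=> xD; apply/imsetP; exists x. Qed.

Lemma faces_sub F : F \in faces e rot -> F \subset D.
Proof. by case/imsetP => x0 _ ->; apply: fc_sub. Qed.

Lemma fc_fs x : x \in D -> fc (fs x) = fc x.
Proof. by move=> xD; apply: fc_eq => //; rewrite inE fs_in // fconnect1. Qed.

Lemma fs_face F : F \in faces e rot -> fs @: F = F.
Proof.
move=> FF; have sD := faces_sub FF.
have sub : fs @: F \subset F.
  apply/subsetP => _ /imsetP [x xF ->].
  have xD : x \in D := subsetP sD x xF.
  by rewrite (faces_mem FF (fs_in xD)) fc_fs // -faces_mem.
apply/eqP; rewrite eqEcard sub card_in_imset ?leqnn //. move=> a b aF bF; apply: fs_inj; apply: (subsetP sD) => //.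
Qed.


Local Open Scope ring_scope.

Lemma face_telescope (R : zmodType) F (phi : 'I_n -> R) : F \in faces e rot ->
  \sum_(x in F) (phi x.1 - phi x.2) = 0.
Proof.
move=> FF; rewrite sumrB.
have -> : \sum_(x in F) phi x.2 = \sum_(x in F) phi (fs x).1 by [].
have -> : \sum_(x in F) phi (fs x).1 = \sum_(y in fs @: F) phi y.1.
  rewrite big_imset //.
  by move=> a b aF bF; apply: fs_inj; apply: (subsetP (faces_sub FF)).
by rewrite fs_face // subrr.
Qed.

Definition Dp := [set x in D | (nat_of_ord x.1 < x.2)%N].

Lemma D_neq x : x \in D -> x.1 != x.2.
Proof. by rewrite inD => h; apply: contraTneq h => ->; apply: sg.2. Qed.

Lemma swap_D x : (swap_pair x \in D) = (x \in D).
Proof. by rewrite !inD /= sg.1. Qed.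

Lemma Dp_D x : x \in Dp -> x \in D.
Proof. by rewrite inE => /andP []. Qed.

Lemma sum_D_Dp (R : zmodType) (G : 'I_n * 'I_n -> R) :
  \sum_(x in D) G x = \sum_(x in Dp) (G x + G (swap_pair x)).
Proof.
rewrite big_split /= (bigID (fun x : 'I_n * 'I_n => (nat_of_ord x.1 < x.2)%N)) /=.
congr (_ + _); first by apply: eq_bigl => x; rewrite [in RHS]inE.
rewrite (reindex_inj (can_inj swap_pairK)) /=; apply: eq_bigl => x.
rewrite swap_D [in RHS]inE /=; case xD: (x \in D) => //=.
have := D_neq xD; rewrite -val_eqE /= => h; lia.
Qed.

Lemma card_edges : #|edges e| = #|Dp|.
Proof.
have -> : edges e = [set [set x.1; x.2] | x in Dp].
  apply/setP => E; apply/imsetP/imsetP => [[x xD ->] | [x xD ->]].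
  - have := D_neq xD; rewrite -val_eqE /= neq_ltn => /orP [lt | lt].
      by exists x => //; rewrite inE xD.
    exists (swap_pair x); first by rewrite inE swap_D xD.
    by rewrite /= setUC.
  - by exists x => //; apply: Dp_D.
rewrite card_in_imset //.
move=> [a b] [c d]; rewrite !inE /= => /andP [_ ab] /andP [_ cd] h.
have : a \in [set c; d] by rewrite -h !inE eqxx.
have : b \in [set c; d] by rewrite -h !inE eqxx orbT.
rewrite !inE => /orP [] /eqP bx /orP [] /eqP ax; subst; try lia; by [].
Qed.


Lemma connect_prop (P : 'I_n -> Prop) a b :
  connect e a b -> P a -> (forall u v, e u v -> P u -> P v) -> P b.
Proof.
move=> /connectP [p pth ->] Pa step.
elim: p a pth Pa => [|c p IH] a //= /andP [eac pth] Pa.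
by apply: IH pth _; apply: step eac Pa.
Qed.

Lemma rot_iter_nbr u v k : e u v -> e u (iter k (rot u) v).
Proof. by move=> euv; elim: k => [|k IH] //=; apply: (rs u).1. Qed.

Lemma face_fun_const (Z : Type) (c : {set 'I_n * 'I_n} -> Z) :
  connected_graph e ->
  (forall x, x \in D -> c (fc x) = c (fc (swap_pair x))) ->
  forall x y, x \in D -> y \in D -> c (fc x) = c (fc y).
Proof.
move=> conn hc.
have step1 : forall u v, e u v -> c (fc (u, v)) = c (fc (u, rot u v)).
  move=> u v euv; have evu : e v u by rewrite sg.1.
  by rewrite hc ?inD //= -(fc_fs (x := (v, u))) ?inD.
have step2 : forall u v w, e u v -> e u w -> c (fc (u, v)) = c (fc (u, w)).
  move=> u v w euv euw.
  have /iter_findex <- := (rs u).2 v w euv euw.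
  elim: (findex _ _ _) => [|k IH] //=.
  by rewrite IH -step1 //; apply: rot_iter_nbr.
move=> [a b] [a' b']; rewrite !inD /= => eab eab'.
pose P u := forall v, e u v -> c (fc (u, v)) = c (fc (a, b)).
have : P a' .
  apply: (connect_prop (conn a a')).
  - by move=> v eav; apply: step2.
  - move=> u v euv Pu w evw.
    have evu : e v u by rewrite sg.1.
    rewrite (step2 _ _ _ evw evu).
    have -> : (v, u) = swap_pair (u, v) by [].
    by rewrite -hc ?inD //; apply: Pu.
by move=> h; rewrite (h b').
Qed.

End Faces.

End Part4.

Section Part5.
Local Set Implicit Arguments. Local Unset Strict Implicit. Local Unset Printing Implicit Defensive.
Local Open Scope ring_scope.

Section Mat.
Variables (R : realType) (n : nat) (e : rel 'I_n) (rot : 'I_n -> 'I_n -> 'I_n)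
  (outer : {set 'I_n * 'I_n}).
Hypothesis n0 : (0 < n)%N.
Hypothesis sg : simple_graph e.
Hypothesis conn : connected_graph e.
Hypothesis rs : rotation_system e rot.
Hypothesis euler : #|edges e| = 0%N \/ (n + #|faces e rot| = #|edges e| + 2)%N.
Hypothesis hout : outer \in faces e rot \/ faces e rot = set0.

Local Notation D := (darts e).
Local Notation P := (Dp e).
Definition Fo := [set F in faces e rot | F != outer].
Definition xr (j : 'I_#|P|) := enum_val j.
Definition Fk (k : 'I_#|Fo|) := enum_val k.

Definition Bm : 'M[R]_(n, #|P|) :=
  \matrix_(u, j) ((u == (xr j).1)%:R - (u == (xr j).2)%:R).
Definition Cm : 'M[R]_(#|P|, #|Fo|) :=
  \matrix_(j, k) ((xr j \in Fk k)%:R - (swap_pair (xr j) \in Fk k)%:R).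

Lemma xrP j : xr j \in P. Proof. exact: enum_valP. Qed.
Lemma xrD j : xr j \in D. Proof. exact: Dp_D (xrP j). Qed.
Lemma FkP k : Fk k \in Fo. Proof. exact: enum_valP. Qed.
Lemma Fk_faces k : Fk k \in faces e rot. Proof. by have := FkP k; rewrite inE => /andP []. Qed.

Lemma rep_sum (h : 'I_n * 'I_n -> R) F :
  (forall x, x \in D -> h (swap_pair x) = - h x) -> F \in faces e rot ->
  \sum_j h (xr j) * ((xr j \in F)%:R - (swap_pair (xr j) \in F)%:R) = \sum_(x in F) h x.
Proof.
move=> hanti FF.
rewrite -(@big_enum_val _ _ _ _ (mem P) (fun x => h x * ((x \in F)%:R - (swap_pair x \in F)%:R))) /=.
have sD := faces_sub FF.
have -> : \sum_(x in F) h x = \sum_(x in D) (if x \in F then h x else 0).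
  rewrite -big_mkcondr; apply: eq_bigl => x.
  by case xF: (x \in F); rewrite ?andbF ?andbT // (subsetP sD).
rewrite (sum_D_Dp sg) /=; apply: eq_bigr => x xP.
rewrite hanti ?Dp_D //.
by case: (x \in F); case: (swap_pair x \in F) => /=; ring.
Qed.

Lemma BC0 : Bm *m Cm = 0.
Proof.
apply/matrixP => u k; rewrite !mxE.
under eq_bigr do rewrite !mxE.
rewrite (@rep_sum (fun x => (u == x.1)%:R - (u == x.2)%:R)) ?Fk_faces //.
  exact: (face_telescope sg rs (fun v => (u == v)%:R : R) (Fk_faces k)).
by move=> x _ /=; ring.
Qed.


Lemma sum_delta (r : 'I_n -> R) a : \sum_u r u * (u == a)%:R = r a.
Proof.
rewrite (bigD1 a) //= eqxx mulr1 big1 ?addr0 // => u /negbTE ->; by rewrite mulr0.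
Qed.

Lemma rank_ker_le p q (A : 'M[R]_(p, q)) (r0 : 'rV_p) :
  (forall r, r *m A = 0 -> exists a, r = a *: r0) -> (\rank (kermx A) <= \rank r0)%N.
Proof.
move=> h; apply: mxrankS; apply/row_subP => i.
have : row i (kermx A) *m A = 0 by rewrite -row_mul mulmx_ker row0.
move/h => [a ->].
exact: scalemx_sub.
Qed.

Lemma dart_rep x : x \in D -> exists j, xr j = x \/ xr j = swap_pair x.
Proof.
move=> xD.
have [xP | xP] := boolP (x \in P).
  by exists (enum_rank_in xP x); left; rewrite /xr enum_rankK_in.
have sP : swap_pair x \in P.
  have ex : e x.1 x.2 by rewrite -inD.
  have := D_neq sg xD; move: xP; rewrite !inE /= ex (sg.1 x.2 x.1) ex /= -val_eqE /= => h h'.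
  lia.
by exists (enum_rank_in sP (swap_pair x)); right; rewrite /xr enum_rankK_in.
Qed.

Lemma kerB (r : 'rV[R]_n) : r *m Bm = 0 -> exists a, r = a *: const_mx 1.
Proof.
move=> rB.
have hj j : r 0 (xr j).1 = r 0 (xr j).2.
  move/matrixP/(_ 0 j): rB; rewrite !mxE.
  under eq_bigr do rewrite !mxE mulrBr.
  by rewrite sumrB !sum_delta => /eqP; rewrite subr_eq0 => /eqP.
have he a b : e a b -> r 0 a = r 0 b.
  move=> eab; have abD : (a, b) \in D by rewrite inD.
  have [j [xj | xj]] := dart_rep abD.
    by have := hj j; rewrite xj.
  by have := hj j; rewrite xj.
exists (r 0 (Ordinal n0)); apply/matrixP => i u; rewrite !mxE ord1 mulr1.
apply: (connect_prop (conn (Ordinal n0) u) (P := fun v => r 0 v = r 0 (Ordinal n0))) => //.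
by move=> a b eab <-; rewrite (he _ _ eab).
Qed.

Lemma rankB : (n <= \rank Bm + 1)%N.
Proof.
have := rank_ker_le (A := Bm) (r0 := const_mx 1) kerB.
rewrite mxrank_ker; have := rank_leq_row (const_mx 1 : 'rV[R]_n); lia.
Qed.


Lemma kerCt (r : 'rV[R]_#|Fo|) : r *m Cm^T = 0 -> r = 0.
Proof.
move=> rC.
pose ct F := \sum_k r 0 k * (Fk k == F)%:R.
have hsum x : x \in D -> \sum_k r 0 k * ((x \in Fk k)%:R - (swap_pair x \in Fk k)%:R)
    = ct (fc e rot x) - ct (fc e rot (swap_pair x)).
  move=> xD; rewrite /ct -sumrB; apply: eq_bigr => k _.
  rewrite !(faces_mem sg rs (Fk_faces k)) ?(swap_D sg) //; ring.
have hj j : ct (fc e rot (xr j)) = ct (fc e rot (swap_pair (xr j))).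
  move/matrixP/(_ 0 j): rC; rewrite !mxE.
  under eq_bigr do rewrite !mxE.
  by rewrite hsum ?xrD // => /eqP; rewrite subr_eq0 => /eqP.
have hc x : x \in D -> ct (fc e rot x) = ct (fc e rot (swap_pair x)).
  move=> xD; have [j [xj | xj]] := dart_rep xD; first by rewrite -xj.
  by have := hj j; rewrite xj swap_pairK.
have cst := face_fun_const sg rs conn hc.
apply/matrixP => i k; rewrite ord1 mxE.
have kF := Fk_faces k.
have oF : outer \in faces e rot.
  case: hout => // f0; by rewrite f0 inE in kF.
case/imsetP: oF => x0 x0D outE.
case/imsetP: (kF) => x1 x1D kE.
have ct0 : ct outer = 0.
  rewrite /ct big1 // => k' _.
  have := FkP k'; rewrite inE => /andP [_ /negbTE ->]; by rewrite mulr0.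
have ctk : ct (Fk k) = r 0 k.
  rewrite /ct (bigD1 k) //= eqxx mulr1 big1 ?addr0 // => k' nk.
  suff -> : (Fk k' == Fk k) = false by rewrite mulr0.
  by apply/negbTE; apply: contra nk => /eqP /enum_val_inj ->.
rewrite -ctk kE -ct0 outE; exact: (cst x1 x0).
Qed.

Lemma rankC : (#|Fo| <= \rank Cm)%N.
Proof.
have hk : forall r : 'rV[R]_#|Fo|, r *m Cm^T = 0 -> exists a : R, r = a *: 0.
  by move=> r h; exists 0; rewrite (kerCt h) scale0r.
have := rank_ker_le hk.
rewrite mxrank_ker mxrank0 mxrank_tr; lia.
Qed.

Lemma dims : (#|P| + 1 <= n + #|Fo|)%N.
Proof.
rewrite -(card_edges sg).
case: euler => [-> | eu]; first by lia.
case: hout => [oF | f0].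
  have : #|Fo| = (#|faces e rot| - 1)%N.
    have -> : Fo = faces e rot :\ outer by apply/setP => F; rewrite !inE andbC.
    by have := cardsD1 outer (faces e rot); rewrite oF /= => ->; rewrite add1n subn1.
  lia.
move: eu; rewrite f0 cards0.
have [/eqP E0 | Epos] := boolP (#|edges e| == 0%N); first by lia.
have [E EE] : exists E, E \in edges e by apply/set0Pn; rewrite -card_gt0 lt0n.
case/imsetP: EE => x xD _.
have := fc_faces rot xD; by rewrite f0 inE.
Qed.


Lemma rowB (p : 'rV[R]_n) j : (p *m Bm) 0 j = p 0 (xr j).1 - p 0 (xr j).2.
Proof.
rewrite !mxE; under eq_bigr do rewrite !mxE mulrBr.
by rewrite sumrB !sum_delta.
Qed.

Lemma grad_darts (dl : 'I_n * 'I_n -> R) :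
  (forall x, x \in D -> dl (swap_pair x) = - dl x) ->
  (forall k, \sum_(x in Fk k) dl x = 0) ->
  exists phi : 'I_n -> R, forall x, x \in D -> dl x = phi x.1 - phi x.2.
Proof.
move=> anti hF.
pose d := \row_j dl (xr j) : 'rV[R]_#|P|.
have dC : d *m Cm = 0.
  apply/matrixP => i k; rewrite ord1 !mxE.
  under eq_bigr do rewrite !mxE.
  by rewrite rep_sum ?Fk_faces // hF.
have [p hp] := grad_mx BC0 rankB rankC dims dC.
exists (fun u => p 0 u) => x xD.
have [j [xj | xj]] := dart_rep xD.
  by have := rowB p j; rewrite -hp mxE xj.
have := rowB p j; rewrite -hp mxE xj anti // => h.
by rewrite -[dl x]opprK h /=; ring.
Qed.

End Mat.

End Part5.

Section Part6.
Local Set Implicit Arguments. Local Unset Strict Implicit. Local Unset Printing Implicit Defensive.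
Local Open Scope ring_scope.

Section DD.
Variable R : realType.
Definition dd (y : R) := asin (sin y).

Lemma sin_in (y : R) : sin y \in `[-1, 1].
Proof. by rewrite in_itv /= sin_geN1 sin_le1. Qed.

Lemma dd_ge (y : R) : - (pi / 2) <= dd y.
Proof. by apply: asin_geNpi2; rewrite sin_geN1 sin_le1. Qed.
Lemma dd_le (y : R) : dd y <= pi / 2.
Proof. by apply: asin_lepi2; rewrite sin_geN1 sin_le1. Qed.

Lemma sin_dd (y : R) : sin (dd y) = sin y.
Proof. by rewrite /dd asinK // sin_in. Qed.

Lemma dd_odd (y : R) : dd (- y) = - dd y.
Proof.
rewrite /dd sinN -{1}(sin_dd y) -sinN /dd sinK // in_itv /=.
have := dd_ge y; have := dd_le y; rewrite /dd => h1 h2.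
apply/andP; split; lra.
Qed.

Lemma cos_dd (y : R) : 0 <= cos y -> cos (dd y) = cos y.
Proof.
move=> c0; rewrite /dd cos_asin ?sin_geN1 ?sin_le1 //.
have -> : 1 - sin y ^+ 2 = cos y ^+ 2 by rewrite -(cos2Dsin2 y); ring.
by rewrite sqrtr_sqr ger0_norm.
Qed.

Lemma dd_mod (y : R) : 0 <= cos y -> exists k : int, y = dd y + k%:~R * (2 * pi).
Proof. by move=> c0; apply: sincos_eq; rewrite ?sin_dd ?cos_dd. Qed.

Lemma sin_mono (p q : R) : - (pi / 2) <= p <= pi / 2 -> - (pi / 2) <= q <= pi / 2 ->
  0 <= (sin p - sin q) * (p - q) ?= iff (p == q).
Proof.
move=> hp hq.
have pI : p \in `[(- (pi / 2)), pi / 2] by rewrite in_itv /=.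
have qI : q \in `[(- (pi / 2)), pi / 2] by rewrite in_itv /=.
split.
  have [pq | pq | ->] := ltgtP p q.
  - have := ltr_sin pI qI; rewrite pq => h.
    by rewrite nmulr_rge0 ?subr_lt0 // subr_le0 ltW.
  - have := ltr_sin qI pI; rewrite pq => h.
    by rewrite pmulr_rge0 ?subr_gt0 // subr_ge0 ltW.
  - by rewrite !subrr mulr0.
apply/idP/idP => [|/eqP ->]; last by rewrite !subrr mulr0 eqxx.
rewrite eq_sym mulf_eq0 => /orP [|]; rewrite subr_eq0 // => /eqP h.
by apply/eqP; apply: (sin_inj pI qI).
Qed.

End DD.

End Part6.

Section Part7.
Local Set Implicit Arguments. Local Unset Strict Implicit. Local Unset Printing Implicit Defensive.
Local Open Scope ring_scope.

Section Wind.
Variables (R : realType) (n : nat) (e : rel 'I_n) (rot : 'I_n -> 'I_n -> 'I_n).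
Hypothesis sg : simple_graph e.
Hypothesis rs : rotation_system e rot.
Variable theta : 'I_n -> R.
Hypothesis hcos : forall x, x \in darts e -> 0 <= cos (theta x.1 - theta x.2).

Local Notation D := (darts e).
Definition dth (x : 'I_n * 'I_n) := dd (theta x.1 - theta x.2).

Lemma dth_anti x : dth (swap_pair x) = - dth x.
Proof. by rewrite /dth /= -dd_odd opprB. Qed.

Lemma sum_mod (A : {set 'I_n * 'I_n}) (a b : 'I_n * 'I_n -> R) :
  (forall x, x \in A -> exists k : int, a x = b x + k%:~R * (2 * pi)) ->
  exists k : int, \sum_(x in A) a x = \sum_(x in A) b x + k%:~R * (2 * pi).
Proof.
move=> h.
apply: (big_rec2 (fun s t => exists k : int, s = t + k%:~R * (2 * pi))).
  by exists 0; rewrite mul0r addr0.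
move=> x s t xA [k ->]; have [k' ->] := h x xA.
by exists (k' + k); rewrite intrD; ring.
Qed.

Lemma face_int F : F \in faces e rot ->
  exists w : int, \sum_(x in F) dth x = w%:~R * (2 * pi).
Proof.
move=> FF.
have [k hk] := @sum_mod F (fun x => theta x.1 - theta x.2) dth
  (fun x xF => dd_mod (hcos (subsetP (faces_sub FF) x xF))).
rewrite (face_telescope sg rs theta FF) in hk.
by exists (- k); rewrite intrN mulNr; apply/eqP; rewrite -subr_eq0 opprK -hk.
Qed.

Definition Wn (F : {set 'I_n * 'I_n}) := Num.floor ((\sum_(x in F) dth x) / (2 * pi)).

Lemma S_W F : F \in faces e rot -> \sum_(x in F) dth x = (Wn F)%:~R * (2 * pi).
Proof.
move=> FF; have [w hw] := face_int FF.
have p0 : 2 * pi != 0 :> R by rewrite mulf_neq0 // gt_eqF // pi_gt0.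
by rewrite /Wn hw mulfK // intrKfloor.
Qed.

Lemma pair_eq (x y : 'I_n * 'I_n) : x \in D -> y \in D ->
  [set x.1; x.2] = [set y.1; y.2] -> x != y -> x = swap_pair y.
Proof.
case: x => a b; case: y => c d /= aD cD h neq.
have : a \in [set c; d] by rewrite -h !inE eqxx.
have : b \in [set c; d] by rewrite -h !inE eqxx orbT.
have := D_neq sg aD; have := D_neq sg cD; rewrite /= => ncd nab.
rewrite !inE => /orP [] /eqP bx /orP [] /eqP ax; subst => //.
- by rewrite eqxx in nab.
- by rewrite eqxx in neq.
- by rewrite eqxx in nab.
Qed.

Lemma face_bound F : F \in faces e rot ->
  `|\sum_(x in F) dth x| <= (face_size F)%:R * (pi / 2).
Proof.
move=> FF; have sD := faces_sub FF.
rewrite (partition_big_imset (fun x : 'I_n * 'I_n => [set x.1; x.2])) /=.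
rewrite /face_size -sum1_card natr_sum mulr_suml.
apply: le_trans (ler_norm_sum _ _ _) _; apply: ler_sum => E /imsetP [x0 x0F ->].
rewrite mul1r (bigD1 x0) ?x0F ?eqxx //=.
have x0D := subsetP sD x0 x0F.
have hb := dd_ge (theta x0.1 - theta x0.2); have hb' := dd_le (theta x0.1 - theta x0.2).
have [sF | sF] := boolP (swap_pair x0 \in F).
  rewrite (big_pred1 (swap_pair x0)); last first.
    move=> x /=; apply/idP/idP.
      case/andP => /andP [xF /eqP hx] nx; apply/eqP.
      exact: (pair_eq (subsetP sD x xF) x0D hx nx).
    move/eqP => ->; rewrite sF /= setUC eqxx /=.
    by apply/eqP => /(congr1 (fun z => z.1)) /= h; move: (D_neq sg x0D); rewrite h eqxx.
  rewrite dth_anti subrr normr0; apply: divr_ge0 => //; exact: pi_ge0.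
rewrite big_pred0; last first.
  move=> x /=; apply/negbTE/negP => /andP [/andP [xF /eqP hx] nx].
  by move: sF; rewrite -(pair_eq (subsetP sD x xF) x0D hx nx) xF.
rewrite addr0 /dth ler_norml; apply/andP; split => //.
Qed.

Lemma W_bound F : F \in faces e rot -> (4 * `|Wn F| <= face_size F)%N.
Proof.
move=> FF; have := face_bound FF; rewrite S_W // normrM.
rewrite -intr_norm -natr_absz (ger0_norm (_ : 0 <= 2 * pi)); last first.
  by apply: mulr_ge0 => //; exact: pi_ge0.
have p0 : 0 < pi :> R := pi_gt0 R.
move=> h; rewrite -(ler_nat R) natrM.
have : (`|Wn F|%N)%:R * 4 * (pi / 2) <= (face_size F)%:R * (pi / 2) :> R.
  by apply: le_trans h; rewrite le_eqVlt; apply/orP; left; apply/eqP; field.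
rewrite ler_pM2r ?divr_gt0 // => h2.
by rewrite mulrC.
Qed.

End Wind.

End Part7.

Section Part8.
Local Set Implicit Arguments. Local Unset Strict Implicit. Local Unset Printing Implicit Defensive.
Local Open Scope ring_scope.

Section Final.
Variables (R : realType) (n : nat) (e : rel 'I_n) (rot : 'I_n -> 'I_n -> 'I_n)
  (outer : {set 'I_n * 'I_n}) (K : R).
Hypothesis n0 : (0 < n)%N.
Hypothesis sg : simple_graph e.
Hypothesis conn : connected_graph e.
Hypothesis hdeg : forall u v, e u v -> (deg e u < 3)%N || (deg e v < 3)%N.
Hypothesis rs : rotation_system e rot.
Hypothesis euler : #|edges e| = 0%N \/ (n + #|faces e rot| = #|edges e| + 2)%N.
Hypothesis hout : outer \in faces e rot \/ faces e rot = set0.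
Hypothesis K0 : 0 < K.

Local Notation D := (darts e).

Lemma hcos_of th : stable_fixed_point e K th ->
  forall x, x \in D -> 0 <= cos (th x.1 - th x.2).
Proof.
move=> st x; rewrite inD => ex.
case/orP: (hdeg ex) => dg; first by have := stable_cos_ge0 K0 sg st ex dg.
have ex' : e x.2 x.1 by rewrite sg.1.
by rewrite -opprB cosN; have := stable_cos_ge0 K0 sg st ex' dg.
Qed.

Lemma sum_D_split (f : 'I_n * 'I_n -> R) :
  \sum_(x in D) f x = \sum_u \sum_(v | e u v) f (u, v).
Proof.
rewrite pair_big_dep /=; apply: eq_big => [x|x _]; first by rewrite inD.
by case: x.
Qed.

Lemma inj_W th1 th2 (st1 : stable_fixed_point e K th1) (st2 : stable_fixed_point e K th2) :
  (forall k : 'I_#|Fo e rot outer|, Wn th1 (Fk k) = Wn th2 (Fk k)) ->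
  same_fixed_point th1 th2.
Proof.
move=> hW.
have hc1 := hcos_of st1; have hc2 := hcos_of st2.
pose dl x := dth th1 x - dth th2 x.
have anti : forall x, x \in D -> dl (swap_pair x) = - dl x.
  by move=> x _; rewrite /dl !dth_anti; ring.
have hF : forall k : 'I_#|Fo e rot outer|, \sum_(x in Fk k) dl x = 0.
  move=> k; rewrite /dl /= sumrB (S_W sg rs hc1 (Fk_faces k)) (S_W sg rs hc2 (Fk_faces k)).
  by rewrite hW subrr.
have [phi hphi] := grad_darts n0 sg conn rs euler hout anti hF.
pose G x := sin (th1 x.1 - th1 x.2) - sin (th2 x.1 - th2 x.2).
have Ganti x : G (swap_pair x) = - G x.
  by rewrite /G /= -(opprB (th1 x.1)) -(opprB (th2 x.1)) !sinN; ring.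
have S1 : \sum_(x in D) G x * phi x.1 = 0.
  rewrite sum_D_split big1 // => u _ /=.
  rewrite -mulr_suml /G sumrB.
  have := st1.1 u; have := st2.1 u; rewrite /kuramoto_fixed_point => -> ->.
  by rewrite subrr mul0r.
have S2 : \sum_(x in D) G x * phi x.2 = 0.
  rewrite (reindex_inj (can_inj swap_pairK)) /=.
  rewrite (eq_bigl (fun x => x \in D)); last by move=> x; rewrite (swap_D sg).
  under eq_bigr do rewrite Ganti mulNr.
  by rewrite sumrN S1 oppr0.
have Stot : \sum_(x in D) (sin (dth th1 x) - sin (dth th2 x)) * (dth th1 x - dth th2 x) = 0.
  under eq_bigr => x xD do rewrite -/(dl x) (hphi x xD) /dth !sin_dd -/(G x) mulrBr.
  by rewrite sumrB S1 S2 subrr.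
have mono x : x \in D -> 0 <= (sin (dth th1 x) - sin (dth th2 x)) * (dth th1 x - dth th2 x)
      ?= iff (dth th1 x == dth th2 x).
  by move=> _; apply: sin_mono; rewrite ?dd_ge ?dd_le.
have eqd : forall x, x \in D -> dth th1 x = dth th2 x.
  move=> x xD; apply/eqP; rewrite -(mono x xD).2; apply/eqP/esym.
  move/psumr_eq0P: Stot; apply => //.
  by move=> y yD; exact: (mono y yD).1.
have hedge : forall u v, e u v -> exists k : int,
    th2 u - th2 v = th1 u - th1 v + k%:~R * (2 * pi).
  move=> u v euv; have uvD : (u, v) \in D by rewrite inD.
  apply: sincos_eq.
    by rewrite -(sin_dd (th2 u - th2 v)) -(sin_dd (th1 u - th1 v)); have := eqd _ uvD; rewrite /dth /= => ->.
  rewrite -(cos_dd (hc2 _ uvD)) -(cos_dd (hc1 _ uvD)).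
  by have := eqd _ uvD; rewrite /dth /= => ->.
pose u0 := Ordinal n0.
pose c := th2 u0 - th1 u0.
have hv : forall i, exists k : int, th2 i = th1 i + c + k%:~R * (2 * pi).
  move=> i; apply: (connect_prop (P := fun v => exists k : int, th2 v = th1 v + c + k%:~R * (2 * pi)) (conn u0 i)).
    by exists 0; rewrite /c mul0r addr0; ring.
  move=> a b eab [k hk]; have [k' hk'] := hedge a b eab.
  exists (k - k'); rewrite intrB; lra.
have [kf hkf] := fin_all_exists hv.
by exists c, kf.
Qed.

End Final.

End Part8.


Lemma card_lt_ord m g : (g <= m)%N -> #|[pred i : 'I_m | (i < g)%N]| = g.
Proof.
move=> le.
have winj : injective (widen_ord le) by move=> a b /(congr1 val) /= /val_inj.
rewrite -[RHS](card_ord g) -(card_image winj).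
apply: eq_card => i; rewrite !inE; apply/idP/imageP => [lt | [j _ ->]] //=.
by exists (Ordinal lt) => //; apply: val_inj.
Qed.

Lemma prod_fold f (g : 'I_f -> nat) : foldr muln 1%N [seq g k | k : 'I_f] = (\prod_(k < f) g k)%N.
Proof. by rewrite foldrE big_image. Qed.

Theorem corollary2 (R : realType) (n : nat) (e : rel 'I_n)
  (rot : 'I_n -> 'I_n -> 'I_n) (outer : {set 'I_n * 'I_n}) (K : R) :
  (0 < n)%N ->
  simple_graph e ->
  connected_graph e ->
  every_edge_on_cycle e ->
  (forall u v, e u v -> (deg e u < 3)%N || (deg e v < 3)%N) ->
  planar_rotation e rot ->
  (outer \in faces e rot \/ faces e rot = set0) ->
  (0 < K)%R ->
  forall (N : nat) (theta : 'I_N -> 'I_n -> R),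
    (forall a, stable_fixed_point e K (theta a)) ->
    (forall a b, same_fixed_point (theta a) (theta b) -> a = b) ->
    (N <= \prod_(F in faces e rot | F != outer) (2 * (face_size F %/ 4) + 1))%N.
Proof.
move=> n0 sg conn _ hdeg [rs euler] hout K0 N theta stab inj.
pose f := #|Fo e rot outer|.
pose g (k : 'I_f) := (2 * (face_size (Fk k) %/ 4) + 1)%N.
pose Mx := (\max_(k < f) g k)%N.
pose W a (k : 'I_f) := Wn (theta a) (Fk k).
pose code a (k : 'I_f) : 'I_Mx.+1 := inord (absz ((W a k + Posz (face_size (Fk k) %/ 4))%R)).
have hc a := hcos_of sg hdeg K0 (stab a).
have hWM a k : (absz (W a k) <= face_size (Fk k) %/ 4)%N.
  by rewrite leq_divRL // mulnC; apply: (W_bound sg rs (hc a) (Fk_faces k)).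
have hb a k : (absz ((W a k + Posz (face_size (Fk k) %/ 4))%R) < g k)%N.
  by have := hWM a k; rewrite /g; lia.
have hcode a k : nat_of_ord (code a k) = absz ((W a k + Posz (face_size (Fk k) %/ 4))%R).
  rewrite inordK // ltnS; apply: leq_trans (ltnW (hb a k)) _.
  by rewrite /Mx; apply: leq_bigmax.
pose phi a := [ffun k => code a k].
have phi_inj : injective phi.
  move=> a b hab; apply: inj.
  apply: (inj_W n0 sg conn hdeg rs euler hout K0 (stab a) (stab b)) => k.
  move/ffunP/(_ k): hab; rewrite /phi !ffunE => /(congr1 (@nat_of_ord _)); rewrite !hcode.
  have := hWM a k; have := hWM b k; rewrite /W; lia.
pose Fam (k : 'I_f) := [pred i : 'I_Mx.+1 | (i < g k)%N].
have sub : [set phi a | a : 'I_N] \subset family Fam.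
  apply/subsetP => _ /imsetP [a _ ->]; apply/familyP => k.
  by rewrite /phi ffunE inE hcode hb.
have := subset_leq_card sub; rewrite card_imset // card_ord card_family.
have -> : [seq #|Fam k| | k : 'I_f] = [seq g k | k : 'I_f].
  apply: eq_map => k; apply: card_lt_ord; apply: leq_trans (leqnSn _).
  by rewrite /Mx; apply: leq_bigmax.
rewrite prod_fold => h; apply: (leq_trans h).
rewrite (eq_bigl (fun F => F \in Fo e rot outer)); last by move=> F; rewrite inE.
by rewrite (big_enum_val (fun F : {set 'I_n * 'I_n} => (2 * (face_size F %/ 4) + 1)%N)).
Qed.
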